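(* Let $n\ge 3$, let $d_0,\dots,d_{n-1}>0$ (indices modulo $n$), let $\lambda\in(\tfrac14,1)$, and let $\beta_i$ and the $n\times n$ matrix $Q_n$ be as defined in the context. Let $P_i=\left(\cos\frac{2i\pi}{n},\sin\frac{2i\pi}{n}\right)\in\mathbb{R}^2$ for $i=0,\dots,n-1$, let $C_P=\sum_{i=0}^{n-1}\beta_iP_i$, and let $P-C_P$ denote the $n\times 2$ matrix whose $i$-th row is $P_i-C_P$. Then $$Q_n(P-C_P)=\lambda(P-C_P),$$ i.e. for every $j$, $\sum_{i=0}^{n-1}Q_{j,i}(P_i-C_P)=\lambda(P_j-C_P)$.
   Context: $\alpha_j=\frac{1}{n}\frac{d_{j-1}d_{j+2}}{(d_{j-1}+d_{j+1})(d_j+d_{j+2})}$, $\beta_i=\frac{d_{i-1}(d_{i-2}+d_{i+2})+d_{i+2}(d_{i-1}+d_{i+3})}{\sum_{k=0}^{n-1}(d_k+d_{k+2})(d_{k-1}+d_{k+3})}$, and $Q_n=(Q_{i,j})_{i,j=0}^{n-1}$ with $Q_{i,j}=(1-\lambda)\beta_j+2\lambda\alpha_i(1+2\cos\frac{2(j-i)\pi}{n})$ for $j\ne i$ and $Q_{i,i}=\lambda+(1-\lambda)\beta_i-2(n-3)\lambda\alpha_i$. Equivalently, the rule is $\overline P_j=(1-\lambda)C+\lambda P_j+2\lambda\alpha_j\big(-nP_j+\sum_{i}(1+2\cos\frac{2(j-i)\pi}{n})P_i\big)$ with $C=\sum_i\beta_iP_i$. *)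

(* Defs.v *)
From HB Require Import structures.
From mathcomp Require Import all_boot all_order all_algebra.
From mathcomp Require Import reals trigo.
Set Implicit Arguments. Unset Strict Implicit. Unset Printing Implicit Defensive.
Import Order.TTheory GRing.Theory Num.Theory.
Local Open Scope ring_scope.

Section Defs.
Variable R : realType.
Variable n : nat.
Variable d : nat -> R.

(* d with index taken modulo n: dm k = d_{k mod n}.  Negative offsets j-1, j-2
   are written j + n - 1, j + n - 2 (n >= 3). *)
Definition dm (k : nat) : R := d (k %% n)%N.

Definition alpha (j : nat) : R :=
  n%:R^-1 * (dm (j + n - 1) * dm (j + 2)) /
    ((dm (j + n - 1) + dm (j + 1)) * (dm j + dm (j + 2))).

Definition beta (i : nat) : R :=
  (dm (i + n - 1) * (dm (i + n - 2) + dm (i + 2))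
     + dm (i + 2) * (dm (i + n - 1) + dm (i + 3)))
  / \sum_(k < n) (dm k + dm (k + 2)) * (dm (k + n - 1) + dm (k + 3)).

Definition Qmat (lam : R) : 'M[R]_n :=
  \matrix_(i < n, j < n)
    if i == j then lam + (1 - lam) * beta i - 2 * (n%:R - 3) * lam * alpha i
    else (1 - lam) * beta j
         + 2 * lam * alpha i
             * (1 + 2 * cos (2 * ((j%:R - i%:R) * pi) / n%:R)).

Definition Pmat : 'M[R]_(n, 2) :=
  \matrix_(i < n, k < 2)
    if k == 0 :> nat then cos (2 * (i%:R * pi) / n%:R)
    else sin (2 * (i%:R * pi) / n%:R).

Definition CP : 'rV[R]_2 := \sum_(i < n) beta i *: row i Pmat.

Definition PmC : 'M[R]_(n, 2) := Pmat - \matrix_(i < n, k < 2) CP 0 k.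

End Defs.

(* Main.v *)
Require Import Defs.
From HB Require Import structures.
From mathcomp Require Import all_boot all_order all_algebra.
From mathcomp Require Import reals trigo.
From mathcomp Require Import ring lra zify.
Import Order.TTheory GRing.Theory Num.Theory.
Local Open Scope ring_scope.
Lemma sin_per (R : realType) (m : nat) (x : R) : sin (x + 2 * m%:R * pi) = sin x.
Proof.
elim: m => [|m IH]; first by rewrite mulr0 mul0r addr0.
have -> : x + 2 * m.+1%:R * pi = (x + 2 * m%:R * pi) + pi *+ 2.
  by rewrite -[m.+1]addn1 natrD; ring.
by rewrite sinD2pi.
Qed.

Lemma cos_per (R : realType) (m : nat) (x : R) : cos (x + 2 * m%:R * pi) = cos x.
Proof.
elim: m => [|m IH]; first by rewrite mulr0 mul0r addr0.
have -> : x + 2 * m.+1%:R * pi = (x + 2 * m%:R * pi) + pi *+ 2.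
  by rewrite -[m.+1]addn1 natrD; ring.
by rewrite cosD2pi.
Qed.

Lemma sum_trig (R : realType) (n m : nat) (h : R) :
  n%:R * h = 2 * m%:R * pi -> sin (h/2) != 0 ->
  \sum_(j < n) cos (j%:R * h) = 0 /\ \sum_(j < n) sin (j%:R * h) = 0.
Proof.
move=> Hn Hs; split.
- apply: (mulfI (x := 2 * sin (h/2))); first by rewrite mulf_neq0 ?pnatr_eq0.
  rewrite mulr0 mulr_sumr.
  rewrite (eq_bigr (fun j : 'I_n => (fun k : nat => sin (k%:R * h - h/2)) (nat_of_ord j).+1
     - (fun k : nat => sin (k%:R * h - h/2)) (nat_of_ord j))); last first.
    move=> j _ /=.
    have -> : (j.+1%:R * h - h/2) = j%:R * h + h/2 by rewrite -addn1 natrD; field.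
    by rewrite sinD sinB; ring.
  rewrite -(big_mkord xpredT (fun j => (fun k : nat => sin (k%:R * h - h/2)) j.+1
     - (fun k : nat => sin (k%:R * h - h/2)) j)) telescope_sumr // /=.
  by rewrite Hn mul0r [2 * _ * pi - _]addrC sin_per add0r subrr.
- apply: (mulfI (x := 2 * sin (h/2))); first by rewrite mulf_neq0 ?pnatr_eq0.
  rewrite mulr0 mulr_sumr.
  rewrite (eq_bigr (fun j : 'I_n => (fun k : nat => - cos (k%:R * h - h/2)) (nat_of_ord j).+1
     - (fun k : nat => - cos (k%:R * h - h/2)) (nat_of_ord j))); last first.
    move=> j _ /=.
    have -> : (j.+1%:R * h - h/2) = j%:R * h + h/2 by rewrite -addn1 natrD; field.
    by rewrite cosD cosB; ring.
  rewrite -(big_mkord xpredT (fun j => (fun k : nat => - cos (k%:R * h - h/2)) j.+1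
     - (fun k : nat => - cos (k%:R * h - h/2)) j)) telescope_sumr // /=.
  by rewrite Hn mul0r [2 * _ * pi - _]addrC cos_per add0r subrr.
Qed.

Lemma trig_facts (R : realType) (n : nat) : (3 <= n)%N ->
  let th := fun j : nat => 2 * (j%:R * pi) / n%:R :> R in
  [/\ \sum_(j < n) cos (th j) = 0, \sum_(j < n) sin (th j) = 0,
      \sum_(j < n) cos (th j) ^+ 2 = n%:R / 2, \sum_(j < n) sin (th j) ^+ 2 = n%:R / 2
    & \sum_(j < n) sin (th j) * cos (th j) = 0].
Proof.
move=> n3 th.
have n0 : (n%:R : R) != 0 by rewrite pnatr_eq0 -lt0n (leq_trans _ n3).
have n0' : (0 : R) < n%:R by rewrite ltr0n (leq_trans _ n3).
have pi0 := @pi_gt0 R.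
have [C1 S1] : \sum_(j < n) cos (j%:R * (2 * pi / n%:R)) = 0 :> R /\ \sum_(j < n) sin (j%:R * (2 * pi / n%:R)) = 0 :> R.
  apply: (@sum_trig R n 1 (2 * pi / n%:R) _ _); first by field.
  rewrite gt_eqF // sin_gt0_pi //.
  have -> : 2 * pi / n%:R / 2 = pi / n%:R :> R by field.
  rewrite divr_gt0 //= ltr_pdivrMr // ltr_pMr // ltr1n (leq_trans _ n3) //.
have [C2 S2] : \sum_(j < n) cos (j%:R * (4 * pi / n%:R)) = 0 :> R /\ \sum_(j < n) sin (j%:R * (4 * pi / n%:R)) = 0 :> R.
  apply: (@sum_trig R n 2 (4 * pi / n%:R) _ _); first by field.
  rewrite gt_eqF // sin_gt0_pi //.
  have -> : 4 * pi / n%:R / 2 = 2 * pi / n%:R :> R by field.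
  rewrite divr_gt0 ?mulr_gt0 //= ltr_pdivrMr // [pi * _]mulrC ltr_pM2r // ltr_nat.
  done.
have thE : forall j : nat, th j = j%:R * (2 * pi / n%:R) by move=> j; rewrite /th; field.
have th2E : forall j : nat, th j *+ 2 = j%:R * (4 * pi / n%:R) by move=> j; rewrite thE; field.
split.
- by under eq_bigr => j _ do rewrite thE.
- by under eq_bigr => j _ do rewrite thE.
- have E : forall j : nat, cos (th j) ^+ 2 = (1 + cos (j%:R * (4 * pi / n%:R))) / 2.
    by move=> j; rewrite -th2E cos_mulr2n; field.
  under eq_bigr => j _ do rewrite E.
  by rewrite -mulr_suml big_split /= C2 sumr_const card_ord addr0.
- have E : forall j : nat, sin (th j) ^+ 2 = (1 - cos (j%:R * (4 * pi / n%:R))) / 2.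
    by move=> j; rewrite -th2E cos_mulr2n sin2cos2; field.
  under eq_bigr => j _ do rewrite E.
  by rewrite -mulr_suml big_split /= sumrN C2 sumr_const card_ord oppr0 addr0.
- have E : forall j : nat, sin (th j) * cos (th j) = sin (j%:R * (4 * pi / n%:R)) / 2.
    by move=> j; rewrite -th2E sin_mulr2n; field.
  under eq_bigr => j _ do rewrite E.
  by rewrite -mulr_suml S2 mul0r.
Qed.

Lemma key (R : realType) (n : nat) (Q : 'I_n -> R) (p b cs : 'I_n -> R) (a lam : R) (i : 'I_n) :
 (forall j, Q j = (1-lam) * b j + 2 * lam * a * (1 + 2 * cs j) + (if i == j then lam - 2 * n%:R * lam * a else 0)) ->
 \sum_j b j = 1 -> \sum_j p j = 0 -> \sum_j cs j = 0 -> \sum_j cs j * p j = n%:R / 2 * p i ->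
 \sum_j Q j * (p j - \sum_l b l * p l) = lam * (p i - \sum_l b l * p l).
Proof.
move=> HQ Hb Hp Hc Hcp; set c := \sum_l b l * p l.
under eq_bigr => j _ do rewrite HQ.
have E : forall j, ((1-lam) * b j + 2 * lam * a * (1 + 2 * cs j) + (if i == j then lam - 2 * n%:R * lam * a else 0)) * (p j - c)
  = (1 - lam) * (b j * p j) - (1 - lam) * c * b j + 2 * lam * a * p j - 2 * lam * a * c
    + 4 * lam * a * (cs j * p j) - 4 * lam * a * c * cs j + (if i == j then (lam - 2 * n%:R * lam * a) * (p j - c) else 0).
  by move=> j; case: (i == j); ring.
under eq_bigr => j _ do rewrite E.
rewrite !big_split /= !sumrN -!mulr_sumr -/c Hb Hp Hc Hcp sumr_const card_ord.
rewrite -big_mkcond /= (big_pred1 i); last by move=> j; rewrite eq_sym.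
rewrite -mulr_natr.
have : (2 : R) != 0 by rewrite pnatr_eq0.
by move=> H2; field.
Qed.

Lemma shift_sum (R : realType) (n : nat) (F : nat -> R) :
  (forall k, F (k + n)%N = F k) -> forall c,
  \sum_(k < n) F (k + c)%N = \sum_(k < n) F k.
Proof.
move=> HF; elim=> [|c IH]; first by under eq_bigr => k _ do rewrite addn0.
rewrite -IH.
have E1 : \sum_(i < n.+1) F (i + c)%N = F c + \sum_(i < n) F (i.+1 + c)%N by rewrite big_ord_recl.
have E2 : \sum_(i < n.+1) F (i + c)%N = \sum_(i < n) F (i + c)%N + F (n + c)%N by rewrite big_ord_recr.
have E3 : F (n + c)%N = F c by rewrite addnC HF.
rewrite E2 E3 addrC in E1.
rewrite (addrI _ E1); apply: eq_bigr => k _.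
by rewrite addSn addnS.
Qed.

Lemma dmn (R : realType) (n : nat) (d : nat -> R) x : dm n d (x + n) = dm n d x.
Proof. by rewrite /dm modnDr. Qed.

Lemma sum_beta (R : realType) (n : nat) (d : nat -> R) :
  (3 <= n)%N -> (forall i, (i < n)%N -> 0 < d i) ->
  \sum_(i < n) beta n d i = 1.
Proof.
move=> n3 dpos.
have dmpos : forall k, 0 < dm n d k.
  by move=> k; rewrite /dm dpos // ltn_pmod //; lia.
rewrite /beta -mulr_suml.
set D := \sum_(k < n) (dm n d k + _) * _.
have Dpos : 0 < D.
  rewrite /D (bigD1 (Ordinal (leq_trans (isT : (0 < 3)%N) n3))) //=.
  apply: ltr_pwDl; first by apply: mulr_gt0; apply: addr_gt0; apply: dmpos.
  by apply: sumr_ge0 => k _; apply/ltW; apply: mulr_gt0; apply: addr_gt0; apply: dmpos.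
set G1 := fun k : nat => dm n d (k + 1) * dm n d k.
set K := fun k : nat => dm n d k * dm n d (k + 3).
set L := fun k : nat => dm n d (k + 2) * dm n d (k + 3).
have dms : forall x a, dm n d (x + n + a) = dm n d (x + a) by move=> x a; rewrite addnAC dmn.
have G1p : forall k, G1 (k + n)%N = G1 k by move=> k; rewrite /G1 dms dmn.
have Kp : forall k, K (k + n)%N = K k by move=> k; rewrite /K dms dmn.
have EN : forall i : nat, dm n d (i + n - 1) * (dm n d (i + n - 2) + dm n d (i + 2))
     + dm n d (i + 2) * (dm n d (i + n - 1) + dm n d (i + 3))
   = G1 (i + (n - 2))%N + 2 * K (i + (n - 1))%N + L i.
  move=> i; rewrite /G1 /K /L.
  have h1 : dm n d (i + (n - 2) + 1) = dm n d (i + n - 1) by congr (dm n d _); lia.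
  have h2 : dm n d (i + (n - 2)) = dm n d (i + n - 2) by congr (dm n d _); lia.
  have h3 : dm n d (i + (n - 1)) = dm n d (i + n - 1) by congr (dm n d _); lia.
  have h4 : dm n d (i + (n - 1) + 3) = dm n d (i + 2).
    by rewrite -(dmn R n d (i + 2)%N); congr (dm n d _); lia.
  rewrite h1 h2 h3 h4; ring.
have ED : forall k : nat, (dm n d k + dm n d (k + 2)) * (dm n d (k + n - 1) + dm n d (k + 3))
   = G1 (k + (n - 1))%N + K k + K (k + (n - 1))%N + L k.
  move=> k; rewrite /G1 /K /L.
  have h1 : dm n d (k + (n - 1) + 1) = dm n d k.
    by rewrite -(dmn R n d k); congr (dm n d _); lia.
  have h3 : dm n d (k + (n - 1)) = dm n d (k + n - 1) by congr (dm n d _); lia.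
  have h4 : dm n d (k + (n - 1) + 3) = dm n d (k + 2).
    by rewrite -(dmn R n d (k + 2)%N); congr (dm n d _); lia.
  rewrite h1 h3 h4; ring.
have SN : \sum_(i < n) (dm n d (i + n - 1) * (dm n d (i + n - 2) + dm n d (i + 2))
     + dm n d (i + 2) * (dm n d (i + n - 1) + dm n d (i + 3))) = D.
  under eq_bigr => i _ do rewrite EN.
  rewrite /D; under [in RHS]eq_bigr => k _ do rewrite ED.
  rewrite !big_split /= -mulr_sumr !(shift_sum R n G1 G1p) !(shift_sum R n K Kp).
  ring.
by rewrite SN divff // gt_eqF.
Qed.

Theorem lemma3 (R : realType) (n : nat) (d : nat -> R) (lam : R) :
  (3 <= n)%N ->
  (forall i, (i < n)%N -> 0 < d i) ->
  1 / 4 < lam -> lam < 1 ->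
  Qmat n d lam *m PmC n d = lam *: PmC n d.
Proof.
move=> n3 dpos _ _.
apply/matrixP => i k; rewrite !mxE.
set th := fun j : nat => 2 * (j%:R * pi) / n%:R :> R.
have n0 : (n%:R : R) != 0 by rewrite pnatr_eq0 -lt0n (leq_trans _ n3).
have [Sc Ss Scc Sss Ssc] := trig_facts R n n3.
rewrite -/th in Sc Ss Scc Sss Ssc.
set p := fun j : 'I_n => Pmat R n j k : R.
have CPE : CP n d 0 k = \sum_(l < n) beta n d l * p l.
  by rewrite /CP summxE; apply: eq_bigr => l _; rewrite 2!mxE.
have PmCE : forall j, PmC n d j k = p j - CP n d 0 k.
  by move=> j; rewrite /PmC /p !mxE.
have -> : (if k == 0 :> nat then cos (2 * (i%:R * pi) / n%:R) else sin (2 * (i%:R * pi) / n%:R)) = p i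
  by rewrite /p mxE.
have pE : forall j : 'I_n, p j = if (k == 0 :> nat) then cos (th j) else sin (th j).
  by move=> j; rewrite /p mxE.
have kE : (k : nat) = 0%N \/ (k : nat) = 1%N by case: k {p pE CPE PmCE} => [[|[|]]] //; auto.
rewrite CPE; under eq_bigr => j _ do rewrite PmCE CPE.
apply: (@key R n _ _ _ (fun j : 'I_n => cos (th j - th i)) (alpha n d i)).
- move=> j; rewrite mxE; case: eqP => [<-|_].
  + by rewrite subrr cos0; ring.
  + have -> : 2 * ((j%:R - i%:R) * pi) / n%:R = th j - th i by rewrite /th; ring.
    by rewrite addr0.
- exact: (sum_beta R n d n3 dpos).
- under eq_bigr => j _ do rewrite pE.
  by case: kE => ->; rewrite /=.
- under eq_bigr => j _ do rewrite cosB.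
  by rewrite big_split /= -!mulr_suml Sc Ss !mul0r addr0.
- under eq_bigr => j _ do rewrite pE cosB.
  rewrite pE; case: kE => -> /=.
  + have E : forall j : 'I_n, (cos (th j) * cos (th i) + sin (th j) * sin (th i)) * cos (th j) = cos (th i) * cos (th j) ^+ 2 + sin (th i) * (sin (th j) * cos (th j)) by move=> j; ring.
    under eq_bigr => j _ do rewrite E.
    by rewrite big_split /= -!mulr_sumr Scc Ssc mulr0 addr0 mulrC.
  + have E : forall j : 'I_n, (cos (th j) * cos (th i) + sin (th j) * sin (th i)) * sin (th j) = cos (th i) * (sin (th j) * cos (th j)) + sin (th i) * sin (th j) ^+ 2 by move=> j; ring.
    under eq_bigr => j _ do rewrite E.
    by rewrite big_split /= -!mulr_sumr Sss Ssc mulr0 add0r mulrC.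
Qed.
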